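(* Let $q$ be a prime power and $n\ge 1$ an integer. For every integer $k$ with $1\le k< n(q-1)$ we have $\dim(C_{n,k}^q)<\dim(C_{n,k+1}^q)$.
   Context: For a prime power $q$ and integers $n\ge 1$, $k\ge 0$, the projective Reed-Muller code $C_{n,k}^q\subseteq \mathbb{F}_q^N$, $N=\frac{q^{n+1}-1}{q-1}$, is defined as follows. For each point of $\mathbb{P}^n(\mathbb{F}_q)$ choose the affine representative $(p_0,\dots,p_n)\in\mathbb{F}_q^{n+1}\setminus\{0\}$ whose left-most nonzero coordinate equals $1$, and fix an ordering $P_1',\dots,P_N'$ of these representatives. Then $C_{n,k}^q=\{(F(P_1'),\dots,F(P_N')) : F\in \mathbb{F}_q[x_0,\dots,x_n]_k\}$, where $\mathbb{F}_q[x_0,\dots,x_n]_k$ is the space of homogeneous polynomials of degree $k$ together with $0$ (so $C_{n,0}^q$ is spanned by the all-ones vector $\mathbf{1}$). *)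

(* Defs.v *)
From HB Require Import structures.
From mathcomp Require Import all_boot all_algebra.
From mathcomp Require Import mpoly.
From mathcomp Require Import boolp.

Set Implicit Arguments.
Unset Strict Implicit.
Unset Printing Implicit Defensive.

Import GRing.Theory.
Local Open Scope ring_scope.

(* A vector x in F^(n+1) is the chosen affine representative of a point of
   P^n(F): its left-most nonzero coordinate equals 1 (so in particular x <> 0). *)
Definition normalized (F : fieldType) (m : nat) (x : {ffun 'I_m -> F}) : bool :=
  [exists i : 'I_m, (x i == 1) && [forall j : 'I_m, (j < i)%N ==> (x j == 0)]].

Definition PPoint (F : finFieldType) (n : nat) : finType :=
  {x : {ffun 'I_n.+1 -> F} | normalized x}.

Definition NPts (F : finFieldType) (n : nat) : nat := #|PPoint F n|.

Definition evalvec (F : finFieldType) (n : nat) (p : {mpoly F[n.+1]})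
  : 'rV[F]_(NPts F n) :=
  \row_(i < NPts F n) p.@[fun j => (val (@enum_val (PPoint F n) predT i)) j].

Definition PRMcode (F : finFieldType) (n k : nat) : {set 'rV[F]_(NPts F n)} :=
  [set v | `[< exists2 p : {mpoly F[n.+1]}, p \is k.-homog & v = evalvec p >] ].

(* Dimension over F of the code (the F-span of its codewords, which is the
   code itself since it is a linear subspace). *)
Definition PRMdim (F : finFieldType) (n k : nat) : nat :=
  \dim <<enum (PRMcode F n k)>>%VS.

(* Main.v *)
Require Import Defs.
From HB Require Import structures.
From mathcomp Require Import all_boot all_algebra all_field.
From mathcomp Require Import mpoly.
From mathcomp Require Import zify.
From mathcomp Require Import boolp.
Set Implicit Arguments. Unset Strict Implicit. Unset Printing Implicit Defensive.
Import GRing.Theory.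
Local Open Scope ring_scope.

Section FF.
Variable F : finFieldType.
Local Notation q := #|F|.

Lemma q_gt1 : (1 < q)%N.
Proof. exact: finNzRing_gt1. Qed.

Lemma card_natr0 : q%:R = 0 :> F.
Proof.
have: \sum_(t : F) (t + 1) = \sum_(t : F) t.
  by rewrite [RHS](reindex_inj (addIr 1)).
rewrite big_split /= sumr_const => /eqP.
by rewrite -subr_eq0 addrAC subrr add0r => /eqP.
Qed.

Lemma unit_pow (t : F) : t != 0 -> t ^+ q.-1 = 1.
Proof.
move=> t0; apply: (mulfI t0); rewrite mulr1 -exprS prednK ?expf_card //.
by apply: ltn_trans q_gt1.
Qed.

Lemma pow_dvd (t : F) d : t != 0 -> (q.-1 %| d)%N -> t ^+ d = 1.
Proof. by move=> t0 /dvdnP [e ->]; rewrite mulnC exprM unit_pow // expr1n. Qed.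

Lemma sum_unit_pow d : (q.-1 %| d)%N -> \sum_(l : F | l != 0) l ^+ d = -1.
Proof.
move=> hd; rewrite (eq_bigr (fun _ => 1)); last by move=> l l0; rewrite pow_dvd.
rewrite sumr_const.
have -> : #|[pred l : F | l != 0]| = q.-1.
  rewrite -(card_finField_unit F) -(card_imset _ val_inj).
  apply: eq_card => x; rewrite !inE; apply/idP/imsetP => [x0|[u _ ->]].
    have xu : x \is a GRing.unit by rewrite unitfE.
    by exists (FinRing.unit F xu).
  by rewrite -unitfE (valP u).
have: q.-1.+1%:R = 0 :> F by rewrite prednK ?card_natr0 //; apply: ltn_trans q_gt1.
by rewrite -addn1 natrD => /eqP; rewrite addr_eq0 => /eqP.
Qed.

Lemma card_nz : #|[pred l : F | l != 0]| = q.-1.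
Proof.
rewrite -(card_finField_unit F) -(card_imset _ val_inj).
apply: eq_card => x; rewrite !inE; apply/idP/imsetP => [x0|[u _ ->]].
  have xu : x \is a GRing.unit by rewrite unitfE.
  by exists (FinRing.unit F xu).
by rewrite -unitfE (valP u).
Qed.

Lemma sum_pow_small m : (m < q.-1)%N -> \sum_(t : F) t ^+ m = 0.
Proof.
case: m => [_|m hm].
  by rewrite (eq_bigr (fun _ => 1)) // sumr_const card_natr0.
have [l l0 lm] : exists2 l : F, l != 0 & l ^+ m.+1 != 1.
  have: ~~ [forall l : F, (l != 0) ==> (l ^+ m.+1 == 1)]; last first.
    by rewrite negb_forall => /existsP [l]; rewrite negb_imply => /andP [? ?]; exists l.
  apply/negP => /forallP H.
  pose rs := enum [pred l : F | l != 0].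
  pose p : {poly F} := 'X^(m.+1) - 1.
  suff : (size rs < size p)%N.
    by rewrite /p size_XnsubC // /rs -cardE card_nz ltnNge hm.
  apply: max_poly_roots; first by rewrite -size_poly_eq0 /p size_XnsubC.
    apply/allP => x; rewrite mem_enum inE => x0; have := H x.
    by rewrite x0 /= rootE !hornerE subr_eq0.
  exact: enum_uniq.
have: \sum_(t : F) t ^+ m.+1 = l ^+ m.+1 * \sum_(t : F) t ^+ m.+1.
  rewrite [LHS](reindex_inj (mulfI l0)) mulr_sumr.
  by apply: eq_bigr => t _; rewrite exprMn.
move/eqP; rewrite -subr_eq0 -{1}(mul1r (\sum__ _)) -mulrBl mulf_eq0.
by rewrite subr_eq0 eq_sym (negbTE lm) => /eqP.
Qed.

Lemma sum_pow_qm1 : \sum_(t : F) t ^+ q.-1 = -1.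
Proof.
rewrite (bigD1 0) //= expr0n /=.
have -> : (q.-1 == 0%N) = false by rewrite -(subn1) subn_eq0 leqNgt q_gt1.
by rewrite add0r; apply: sum_unit_pow.
Qed.

End FF.

Section Points.
Variables (F : finFieldType) (n : nat).
Local Notation V := {ffun 'I_n.+1 -> F}.

Definition sc (l : F) (x : V) : V := [ffun i => l * x i].

Lemma norm_lead (x : V) : normalized x ->
  exists i : 'I_n.+1, x i = 1 /\ forall j : 'I_n.+1, (j < i)%N -> x j = 0.
Proof.
case/existsP => i /andP [/eqP xi /forallP H]; exists i; split => // j ji.
by have := H j; rewrite ji => /eqP.
Qed.

Lemma scale_inj : {in [pred p : PPoint F n * F | p.2 != 0] &,
  injective (fun p => sc p.2 (val p.1))}.
Proof.
move=> [P l] [P' l']; rewrite !inE /= => l0 l0' E.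
have Ei x : l * val P x = l' * val P' x.
  by have := congr1 (fun f : V => f x) E; rewrite /sc !ffunE.
have [i [Pi Pj]] := norm_lead (valP P).
have [i' [Pi' Pj']] := norm_lead (valP P').
have ii : i = i'.
  case: (ltngtP i i') => h; last exact: val_inj.
  - by have := Ei i; rewrite Pi Pj' // mulr1 mulr0 => /eqP; rewrite (negbTE l0).
  - by have := Ei i'; rewrite Pi' Pj // mulr1 mulr0 => /eqP; rewrite eq_sym (negbTE l0').
subst i'.
have ll : l = l' by have := Ei i; rewrite Pi Pi' !mulr1.
subst l'; congr pair; apply: val_inj; apply/ffunP => x.
by apply: (mulfI l0); apply: Ei.
Qed.

Lemma points_sum (g : V -> F) :
  \sum_x g x = g 0 + \sum_(P : PPoint F n) \sum_(l | l != 0) g (sc l (val P)).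
Proof.
rewrite (bigD1 (0 : V)) //=; congr (_ + _).
rewrite pair_big_dep /=.
rewrite (eq_bigl (fun p => p \in [pred p : PPoint F n * F | p.2 != 0])) //.
rewrite -(big_imset _ scale_inj) /=.
apply: eq_bigl => x; apply/idP/imsetP => [x0|[[P l]]]; last first.
  rewrite inE /= => l0 ->; apply/eqP => E.
  have [i [Pi _]] := norm_lead (valP P).
  have := congr1 (fun f : V => f i) E; rewrite /sc !ffunE Pi mulr1 => /eqP.
  by rewrite (negbTE l0).
have [t xt] : exists t, x t != 0.
  apply/existsP; move: x0; apply: contraR; rewrite negb_exists => /forallP H.
  by apply/eqP/ffunP => t; rewrite ffunE; apply/eqP; rewrite -[_ == _]negbK H.
case: (@arg_minnP _ t (fun j => x j != 0) (fun j : 'I_n.+1 => nat_of_ord j) xt) => i xi imin.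
pose y : V := sc (x i)^-1 x.
have Hy : normalized y.
  apply/existsP; exists i; rewrite /y /sc ffunE mulVf // eqxx /=.
  apply/forallP => j; apply/implyP => ji; rewrite ffunE.
  case: (eqVneq (x j) 0) => [->|xj]; first by rewrite mulr0.
  by have := imin j xj; rewrite leqNgt ji.
exists ((exist _ y Hy : PPoint F n), x i); first by rewrite inE.
by apply/ffunP => j; rewrite /sc /= !ffunE mulrA mulfV // mul1r.
Qed.

Lemma points_sum_homog (g : V -> F) d :
  (forall l x, g (sc l x) = l ^+ d * g x) -> (#|F|.-1 %| d)%N -> (0 < d)%N ->
  \sum_(P : PPoint F n) g (val P) = - \sum_x g x.
Proof.
move=> hg hd d0.
have g0 : g 0 = 0.
  have -> : (0 : V) = sc 0 0 by apply/ffunP => i; rewrite !ffunE mul0r.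
  by rewrite hg expr0n; case: d d0 hd hg => // d _ _ _; rewrite mul0r.
rewrite points_sum g0 add0r -sumrN; apply: eq_bigr => P _.
rewrite (eq_bigr (fun l => l ^+ d * g (val P))); last by move=> l _; rewrite hg.
by rewrite -mulr_suml sum_unit_pow // mulN1r opprK.
Qed.

End Points.

Section Mpoly.
Variables (F : finFieldType) (n : nat).
Local Notation V := {ffun 'I_n.+1 -> F}.

Lemma prodpow_sc (e : 'I_n.+1 -> nat) l (x : V) :
  \prod_i (sc l x) i ^+ e i = l ^+ (\sum_i e i) * \prod_i x i ^+ e i.
Proof.
rewrite -prodrXr -big_split /=; apply: eq_bigr => i _.
by rewrite ffunE exprMn.
Qed.

Lemma meval_homog (p : {mpoly F[n.+1]}) k l (x : V) : p \is k.-homog ->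
  p.@[sc l x] = l ^+ k * p.@[x].
Proof.
move=> /dhomogP hp; rewrite !mevalE mulr_sumr; apply: eq_big_seq => m mm.
rewrite mulrCA; congr (_ * _); rewrite prodpow_sc; congr (_ ^+ _ * _).
have := hp m mm; rewrite /= => <-; exact: (esym (mdegE m)).
Qed.

Lemma sum_prod_pow (e : 'I_n.+1 -> nat) :
  \sum_(x : V) \prod_i x i ^+ e i = \prod_i \sum_(t : F) t ^+ e i.
Proof. by rewrite bigA_distr_bigA. Qed.

Lemma sum_meval (p : {mpoly F[n.+1]}) (e : 'I_n.+1 -> nat) :
  \sum_(x : V) p.@[x] * \prod_i x i ^+ e i =
  \sum_(m <- msupp p) p@_m * \prod_i \sum_(t : F) t ^+ (m i + e i).
Proof.
under eq_bigr => x _ do rewrite mevalE mulr_suml.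
rewrite exchange_big /=; apply: eq_bigr => m _.
rewrite -sum_prod_pow mulr_sumr; apply: eq_bigr => x _.
by rewrite -mulrA -big_split /=; congr (_ * _); apply: eq_bigr => i _; rewrite exprD.
Qed.

End Mpoly.

Section Filt.
Variables (K : fieldType) (N : nat).
Local Notation RV := 'rV[K]_N.

Definition proj (S : {set 'I_N}) : 'End(RV) :=
  linfun (mulmxr (diag_mx (\row_i (i \in S)%:R))).

Lemma projE (S : {set 'I_N}) (v : RV) i : proj S v 0 i = v 0 i * (i \in S)%:R.
Proof. by rewrite lfunE /= mul_mx_diag !mxE. Qed.

Lemma lker_projP (S : {set 'I_N}) (v : RV) :
  reflect (forall i, i \in S -> v 0 i = 0) (v \in lker (proj S)).
Proof.
rewrite memv_ker; apply: (iffP eqP) => [E i iS|H].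
  by have := congr1 (fun w : RV => w 0 i) E; rewrite projE iS mulr1 mxE.
apply/rowP => i; rewrite projE mxE.
by case: (boolP (i \in S)) => iS; rewrite ?mulr0 // H // mul0r.
Qed.

Definition Zs (U : {vspace RV}) S := (U :&: lker (proj S))%VS.
Definition Rs (U : {vspace RV}) S S' := (proj S @: Zs U S')%VS.

Lemma filt_dim (T : nat -> {set 'I_N}) m (U W : {vspace RV}) :
  (0 < m)%N -> T 0%N = setT -> T m = set0 -> (forall j, T j.+1 \subset T j) ->
  (forall j, (j < m)%N -> (Rs U (T j) (T j.+1) <= Rs W (T j) (T j.+1))%VS) ->
  (\dim (Rs U (T 0%N) (T 1%N)) < \dim (Rs W (T 0%N) (T 1%N)))%N ->
  (\dim U < \dim W)%N.
Proof.
move=> m0 T0 Tm Tsub Hsub Hlt.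
have key X j : \dim (Zs X (T j.+1)) =
    (\dim (Zs X (T j)) + \dim (Rs X (T j) (T j.+1)))%N.
  rewrite -(limg_ker_dim (proj (T j)) (Zs X (T j.+1))); congr (_ + _)%N.
  rewrite /Zs -capvA.
  suff -> : (lker (proj (T j.+1)) :&: lker (proj (T j)) = lker (proj (T j)))%VS by [].
  apply/capv_idPr.
  apply/subvP => v /lker_projP H; apply/lker_projP => i iT.
  by apply: H; apply: (subsetP (Tsub j)).
have Z0 X : Zs X (T 0%N) = 0%VS.
  apply/eqP; rewrite -subv0; apply/subvP => v; rewrite memv_cap memv0.
  case/andP => _ /lker_projP H; apply/eqP/rowP => i; rewrite mxE H // T0 inE.
  done.
have Zm X : Zs X (T m) = X.
  apply/capv_idPl/subvP => v _; apply/lker_projP => i; by rewrite Tm inE.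
have claim j : (j <= m)%N ->
    (\dim (Zs U (T j)) + (0 < j) <= \dim (Zs W (T j)))%N.
  elim: j => [|j IH] hj; first by rewrite !Z0 dimv0.
  move: (IH (ltnW hj)) (dimvS (Hsub j hj)); rewrite (key U j) (key W j).
  case: j {IH} hj => [|j] hj /= A B.
    by rewrite !Z0 dimv0 !add0n addn1.
  by rewrite addnAC; apply: leq_add.
by have := claim m (leqnn m); rewrite !Zm m0 addn1.
Qed.

End Filt.

Lemma exists_a (c m k : nat) : (k <= m * c)%N ->
  exists a : nat -> nat, [/\ a 0%N = 0%N, (forall i, a i <= c)%N &
                             (\sum_(i < m.+1) a i)%N = k].
Proof.
elim: m k => [|m IH] k hk.
  by exists (fun _ => 0%N); split => //; rewrite big_ord1; move: hk; rewrite mul0n leqn0 => /eqP.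
have [a [a0 ac sa]] := IH (k - minn c k)%N (ltac:(rewrite mulSn in hk; lia)).
exists (fun i => if i == m.+1 then minn c k else a i); split => //.
  by move=> i; case: (i == m.+1) => //; apply: geq_minl.
rewrite big_ord_recr /= eqxx.
rewrite (eq_bigr (fun i : 'I_m.+1 => a i)); last first.
  by move=> i _; rewrite ifN // neq_ltn ltn_ord.
rewrite sa; lia.
Qed.

Section Main.
Variables (F : finFieldType) (n : nat).
Local Notation q := #|F|.
Local Notation V := {ffun 'I_n.+1 -> F}.
Local Notation RV := 'rV[F]_(NPts F n).

Definition pt (i : 'I_(NPts F n)) : V := val (@enum_val (PPoint F n) predT i).

Lemma pt_norm i : normalized (pt i).
Proof. exact: valP. Qed.

Lemma evalvecE (p : {mpoly F[n.+1]}) i : evalvec p 0 i = p.@[pt i].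
Proof. by rewrite /evalvec mxE. Qed.

Lemma evalvecD (p p' : {mpoly F[n.+1]}) : evalvec (p + p') = evalvec p + evalvec p'.
Proof. by apply/rowP => i; rewrite !mxE mevalD. Qed.

Lemma evalvecZ c (p : {mpoly F[n.+1]}) : evalvec (c *: p) = c *: evalvec p.
Proof. by apply/rowP => i; rewrite !mxE mevalZ. Qed.

Lemma evalvec0 : @evalvec F n 0 = 0.
Proof. by apply/rowP => i; rewrite !mxE meval0. Qed.

Lemma memC' k (p : {mpoly F[n.+1]}) : p \is k.-homog ->
  evalvec p \in <<enum (PRMcode F n k)>>%VS.
Proof.
move=> hp; apply: memv_span; rewrite mem_enum inE; apply/asboolP.
by exists p.
Qed.

Lemma memC k (v : RV) : v \in <<enum (PRMcode F n k)>>%VS ->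
  exists2 p : {mpoly F[n.+1]}, p \is k.-homog & v = evalvec p.
Proof.
move=> hv; have := @coord_span _ _ _ (in_tuple (enum (PRMcode F n k))) v hv.
move=> ->; apply: (big_ind (fun w => exists2 p : {mpoly F[n.+1]}, p \is k.-homog & w = evalvec p)).
- by exists 0; rewrite ?evalvec0 // rpred0.
- move=> _ _ [p hp ->] [p' hp' ->]; exists (p + p'); first exact: rpredD.
  by rewrite evalvecD.
- move=> i _; have : (in_tuple (enum (PRMcode F n k)))`_i \in PRMcode F n k.
    by rewrite -mem_enum; apply: mem_nth; exact: ltn_ord.
  rewrite inE => /asboolP [p hp ->]; exists (coord (in_tuple (enum (PRMcode F n k))) i v *: p).
    exact: rpredZ.
  by rewrite evalvecZ.
Qed.

Lemma norm0 (x : V) : normalized x -> x ord0 = 0 \/ x ord0 = 1.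
Proof.
case/norm_lead => i [xi xj]; case: (posnP i) => hi.
  by right; rewrite -xi; congr (x _); apply: val_inj.
by left; apply: xj.
Qed.

Definition Tset (j : nat) : {set 'I_(NPts F n)} :=
  [set i | [forall t : 'I_n.+1, (t < j)%N ==> (pt i t == 0)]].

Lemma TsetP j i : reflect (forall t : 'I_n.+1, (t < j)%N -> pt i t = 0) (i \in Tset j).
Proof.
rewrite inE; apply: (iffP forallP) => H t; first by move=> tj; have := H t; rewrite tj => /eqP.
by apply/implyP => tj; rewrite H.
Qed.

Lemma Tset_lead j i : (j < n.+1)%N -> i \in Tset j -> pt i (inord j) != 0 ->
  pt i (inord j) = 1.
Proof.
move=> jn /TsetP H nz; have [i0 [Pi0 Pj]] := norm_lead (pt_norm i).
case: (ltngtP i0 j) => h.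
- by have := H _ h; rewrite Pi0 => /eqP; rewrite oner_eq0.
- by move: nz; rewrite Pj ?eqxx // inordK.
- by rewrite -Pi0; congr (pt i _); apply: val_inj; rewrite /= inordK.
Qed.

Section Lambda.
Variables (k : nat) (a : nat -> nat).
Hypotheses (a0 : a 0%N = 0%N) (aq : forall i, (a i <= q.-1)%N)
           (sa : (\sum_(i < n.+1) a i)%N = k) (n1 : (1 <= n)%N) (k1 : (1 <= k)%N).

Definition b (t : nat) : nat := if t == 0%N then 0%N else (q.-1 - a t)%N.

Definition Lam (v : RV) : F := \sum_i v 0 i * \prod_(t < n.+1) pt i t ^+ b t.

Lemma q1_gt0 : (0 < q.-1)%N.
Proof. by have := q_gt1 F; case: q => [|[|]]. Qed.

Lemma sum_ab : (k + \sum_(t < n.+1) b t)%N = (n * q.-1)%N.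
Proof.
rewrite -sa -big_split /= big_ord_recl /= /b /= a0 add0n.
rewrite (eq_bigr (fun _ => q.-1)); last by move=> i _; rewrite /= subnKC ?aq.
by rewrite sum_nat_const card_ord.
Qed.

Lemma sum_pts_G (G : V -> F) : \sum_i G (pt i) = \sum_(P : PPoint F n) G (val P).
Proof.
have := big_enum_val (op := +%R) (idx := 0) (A := @predT (PPoint F n)) (fun P => G (val P)).
rewrite /NPts /pt => <-. by apply: eq_bigl => x.
Qed.

Lemma Lam_homog f : f \is k.-homog -> Lam (evalvec f) = 0.
Proof.
move=> hf; rewrite /Lam.
under eq_bigr => i _ do rewrite evalvecE.
rewrite (sum_pts_G (fun x => f.@[x] * \prod_(t < n.+1) x t ^+ b t)).
rewrite (@points_sum_homog F n (fun x => f.@[x] * \prod_(t < n.+1) x t ^+ b t) (k + \sum_(t < n.+1) b t)%N); first last.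
- by rewrite sum_ab muln_gt0 n1 q1_gt0.
- by rewrite sum_ab dvdn_mull.
- by move=> l x; rewrite (meval_homog _ _ hf) prodpow_sc exprD mulrACA.
rewrite sum_meval big_seq big1 ?oppr0 // => m mm.
have dm : mdeg m = k by move/dhomogP: hf; apply.
apply/eqP; rewrite mulf_eq0; apply/orP; right.
case: (posnP (m ord0)) => m0.
  rewrite (bigD1 ord0) //= m0 /b /= sum_pow_small ?mul0r //; exact: q1_gt0.
have [t mt] : exists t : 'I_n.+1, (m t < a t)%N.
  case: (boolP [exists t : 'I_n.+1, (m t < a t)%N]) => [/existsP //|].
  rewrite negb_exists => /forallP H; exfalso.
  have : (\sum_(t < n.+1) a t < \sum_(t < n.+1) m t)%N.
    rewrite !big_ord_recl a0 add0n; apply: (@leq_add 1); first exact: m0.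
    by apply: leq_sum => i _; rewrite leqNgt (H _).
  by rewrite sa -(mdegE m) dm ltnn.
have t0 : (t : nat) != 0%N by apply/eqP => t0; move: mt; rewrite t0 a0.
rewrite (bigD1 t) //= sum_pow_small ?mul0r // /b (negbTE t0).
have := aq t; lia.
Qed.

Definition mA : 'X_{1..n.+1} := [multinom a i | i < n.+1].

Definition wpoly : {mpoly F[n.+1]} := 'X_ord0 * 'X_[mA].

Lemma wpoly_homog : wpoly \is k.+1.-homog.
Proof.
have h := @dhomogM n.+1 F mdeg 1%N 'X_ord0 k 'X_[mA]; rewrite add1n in h.
apply: h; first by rewrite dhomogX; apply/eqP; exact: mdeg1.
rewrite dhomogX; apply/eqP; apply: (eq_trans (mdegE mA)).
rewrite -sa; apply: eq_bigr => i _; exact: mnmE.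
Qed.

Lemma wpolyE (x : V) : wpoly.@[x] = x ord0 * \prod_(t < n.+1) x t ^+ a t.
Proof.
rewrite /wpoly mevalM mevalXU mevalX; congr (_ * _); apply: eq_bigr => i _.
by rewrite mnmE.
Qed.

Lemma Lam_w : Lam (evalvec wpoly) != 0.
Proof.
rewrite /Lam.
under eq_bigr => i _ do rewrite evalvecE.
have E i : wpoly.@[pt i] * \prod_(t < n.+1) pt i t ^+ b t =
           \prod_(t < n.+1) pt i t ^+ q.-1.
  rewrite wpolyE -mulrA -big_split /=.
  rewrite [in RHS]big_ord_recl [in LHS]big_ord_recl /b /= a0 !expr0 mul1r.
  rewrite (eq_bigr (fun t => pt i (lift ord0 t) ^+ q.-1)); last first.
    by move=> t _; rewrite -exprD subnKC ?aq.
  case: (norm0 (pt_norm i)) => ->; last by rewrite expr1n !mul1r.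
  by rewrite expr0n /= (negbTE (lt0n_neq0 q1_gt0)) !mul0r.
rewrite (eq_bigr _ (fun i _ => E i)).
rewrite (sum_pts_G (fun x => \prod_(t < n.+1) x t ^+ q.-1)).
rewrite (@points_sum_homog F n (fun x => \prod_(t < n.+1) x t ^+ q.-1) (\sum_(t < n.+1) q.-1)%N); first last.
- by rewrite sum_nat_const card_ord muln_gt0 q1_gt0.
- by rewrite sum_nat_const card_ord dvdn_mull.
- by move=> l x; rewrite prodpow_sc.
rewrite sum_prod_pow (eq_bigr (fun _ => -1)); last by move=> t _; rewrite sum_pow_qm1.
by rewrite prodr_const oppr_eq0 expf_neq0 // oppr_eq0 oner_eq0.
Qed.

Lemma w_notin : evalvec wpoly \notin <<enum (PRMcode F n k)>>%VS.
Proof.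
apply/negP => /memC [f hf E]; have := Lam_w; rewrite E Lam_homog //.
by rewrite eqxx.
Qed.

End Lambda.

End Main.

Lemma main_lt (F : finFieldType) (n k : nat) :
  (1 <= n)%N -> (1 <= k)%N -> (k <= n * #|F|.-1)%N ->
  (PRMdim F n k < PRMdim F n k.+1)%N.
Proof.
move=> n1 k1 kq; have [a [a0 aq sa]] := exists_a kq.
rewrite /PRMdim.
set U := <<enum (PRMcode F n k)>>%VS; set W := <<enum (PRMcode F n k.+1)>>%VS.
have T0 : Tset F n 0 = setT.
  by apply/setP => i; rewrite [RHS]inE; apply/TsetP => t.
have inT0 i : i \in Tset F n 0 by rewrite T0 inE.
have Hsub j : (j < n.+1)%N ->
    (Rs U (Tset F n j) (Tset F n j.+1) <= Rs W (Tset F n j) (Tset F n j.+1))%VS.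
  move=> jn; apply/subvP => u /memv_imgP [v]; rewrite memv_cap.
  case/andP => vU /lker_projP vZ ->.
  have [p hp Ev] := memC vU.
  apply/memv_imgP; exists (evalvec ('X_(inord j) * p)).
    rewrite memv_cap; apply/andP; split.
      apply: memC'.
      have h := @dhomogM n.+1 F mdeg 1%N 'X_(inord j) k p; rewrite add1n in h.
      apply: h => //; rewrite dhomogX; apply/eqP; exact: mdeg1.
    apply/lker_projP => i /TsetP H; rewrite evalvecE mevalM mevalXU H ?mul0r //.
    by rewrite inordK.
  apply/rowP => i; rewrite !projE; case: (boolP (i \in Tset F n j)) => iT; last by rewrite !mulr0.
  rewrite Ev !evalvecE mevalM mevalXU.
  case: (eqVneq (pt i (inord j)) 0) => h; last by rewrite (Tset_lead jn iT h) mul1r.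
  have iT1 : i \in Tset F n j.+1.
    apply/TsetP => t; rewrite ltnS leq_eqVlt => /orP [/eqP tj|tj].
      by rewrite -h; congr (pt i _); apply: val_inj; rewrite /= inordK.
    by move/TsetP: iT; apply.
  have := vZ i iT1; rewrite Ev evalvecE => ->.
  by rewrite h !mul0r.
apply: (@filt_dim F (NPts F n) (Tset F n) n.+1 U W) => //.
- apply/setP => i; rewrite [RHS]inE; apply/negP => /TsetP H.
  have [i0 [Pi0 _]] := norm_lead (pt_norm i).
  by have := H i0 (ltn_ord i0); rewrite Pi0 => /eqP; rewrite oner_eq0.
- move=> j; apply/subsetP => i /TsetP H; apply/TsetP => t tj; apply: H.
  exact: ltnW.
have incl := Hsub 0%N (ltn0Sn n).
set w := evalvec (wpoly F n a).
have wW : w \in Rs W (Tset F n 0) (Tset F n 1).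
  apply/memv_imgP; exists w.
    rewrite memv_cap; apply/andP; split; first exact/memC'/wpoly_homog.
    by apply/lker_projP => i /TsetP H; rewrite evalvecE wpolyE H // mul0r.
  by apply/rowP => i; rewrite projE inT0 mulr1.
have wU : w \notin Rs U (Tset F n 0) (Tset F n 1).
  apply/negP => /memv_imgP [v]; rewrite memv_cap => /andP [vU _] wv.
  have : w \in U.
    suff -> : w = v by [].
    by rewrite wv; apply/rowP => i; rewrite projE inT0 mulr1.
  by apply/negP; apply: (w_notin a0 aq sa n1 k1).
rewrite ltn_neqAle (dimvS incl) andbT; apply/negP => /eqP E.
have : Rs U (Tset F n 0) (Tset F n 1) == Rs W (Tset F n 0) (Tset F n 1).
  by rewrite eqEdim incl E leqnn.
by move/eqP => E'; move: wU; rewrite E' wW.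
Qed.

Theorem mainTheorem1 (F : finFieldType) (n k : nat) :
  (1 <= n)%N -> (1 <= k)%N -> (k < n * (#|F| - 1))%N ->
  (PRMdim F n k < PRMdim F n k.+1)%N.
Proof.
move=> n1 k1 kq; apply: main_lt => //; rewrite -subn1; exact: ltnW.
Qed.
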